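(* Assume $p<2q-1$. For every finite word $u$ over $B$ accepted by $\widehat{\mathcal{T}_{p/q}}$, there exists a finite word $v$ over $A_p$ accepted by $\mathcal{T}_{p/q}$ such that $\pi(u)=\pi(v)$ and $|u|=|v|$.
   Context: Let $p>q>1$ be coprime integers, $A_p=\{0,\dots,p-1\}$ and $B=\{p-(2q-1),\dots,p-1\}$. For $n\in\mathbb{N}$ and $a\in\mathbb{Z}$, let $\tau(n,a)=\frac{np+a}{q}$, defined only when $q$ divides $np+a$. Let $\mathcal{T}_{p/q}$ (resp. $\widehat{\mathcal{T}_{p/q}}$) be the deterministic automaton with state set $\mathbb{N}$, alphabet $A_p$ (resp. $B$), initial state $0$, and transitions $n\xrightarrow{a}\tau(n,a)$ for $a$ in the alphabet with $\tau(n,a)$ defined. A finite word is accepted if it labels a path starting at $0$. For a finite word $a_k a_{k-1}\cdots a_0$ of integer digits, $\pi(a_k\cdots a_0)=\sum_{i=0}^{k}\frac{a_i}{q}\left(\frac{p}{q}\right)^i$. $|u|$ denotes the length of $u$. *)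

(* Defs.v *)
From mathcomp Require Import all_boot all_order all_algebra.
Set Implicit Arguments. Unset Strict Implicit. Unset Printing Implicit Defensive.
Import Order.TTheory GRing.Theory Num.Theory.

(* Words a_k a_{k-1} ... a_0 are lists of integer digits, most significant
   digit first: [:: a_k; ...; a_0]. *)

Definition tau (p q : nat) (n : nat) (a : int) : option nat :=
  let m := (n%:Z * p%:Z + a)%R in
  if (0 <= m)%R && (q%:Z %| m)%Z then Some (absz m %/ q)%N else None.

Fixpoint run (p q : nat) (D : pred int) (n : nat) (w : seq int) : option nat :=
  match w with
  | [::] => Some n
  | a :: w' =>
      if D a then
        match tau p q n a with
        | Some m => run p q D m w'
        | None => None
        end
      else None
  end.

Definition accepted (p q : nat) (D : pred int) (w : seq int) : bool :=
  run p q D 0 w != None.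

Definition alphA (p : nat) : pred int :=
  fun a => ((0 <= a) && (a <= p%:Z - 1))%R.

Definition alphB (p q : nat) : pred int :=
  fun a => ((p%:Z - (2 * q%:Z - 1) <= a) && (a <= p%:Z - 1))%R.

Definition piw (p q : nat) (w : seq int) : rat :=
  (\sum_(i < size w)
     ((nth 0%R (rev w) i)%:~R / q%:R) * (p%:R / q%:R) ^+ i)%R.

(* Main.v *)
Require Import Defs.
From mathcomp Require Import all_boot all_order all_algebra zify.
Import Order.TTheory GRing.Theory Num.Theory.
Local Open Scope ring_scope.

Lemma tau_some p q n a m : (0 < q)%N -> tau p q n a = Some m ->
  (m * q)%N%:Z = (n%:Z * p%:Z + a)%R.
Proof.
move=> q0; rewrite /tau; case: ifP => // /andP[h0 hd] [<-].
have hd' : (q %| absz (n%:Z * p%:Z + a)%R)%N by exact: hd.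
by rewrite divnK // gez0_abs.
Qed.

Lemma tau_of p q n a m : (0 < q)%N -> (m * q)%N%:Z = (n%:Z * p%:Z + a)%R ->
  tau p q n a = Some m.
Proof.
move=> q0 h; rewrite /tau -h.
have -> : (q%:Z %| (m*q)%N%:Z)%Z by apply: (dvdn_mull m (dvdnn q)).
by rewrite /= mulnK.
Qed.

Lemma run_cat p q D n v w :
  run p q D n (v ++ w) = obind (fun m => run p q D m w) (run p q D n v).
Proof.
elim: v n => [|a v IH] n //=.
case: (D a) => //; case: (tau p q n a) => // m.
Qed.

Definition f (p q N : nat) := (N * q %/ p)%N.

Lemma forward p q u n N : (0 < q)%N -> (0 < p)%N -> all (alphB p q) u ->
  run p q (alphB p q) n u = Some N -> (iter (size u) (f p q) N <= n)%N.
Proof.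
move=> q0 p0; elim: u n => [|a u IH] n /=; first by move=> _ [->].
case/andP=> ha hu; rewrite ha.
case ht: (tau p q n a) => [m|] // hr.
have hm := tau_some _ _ _ _ _ q0 ht.
have := IH m hu hr => him.
apply: leq_trans (_ : f p q m <= n)%N.
  by rewrite /f leq_div2r // leq_mul2r him orbT.
rewrite /f -ltnS ltn_divLR //.
move: ha; rewrite /alphB => /andP[_ ha2].
have : (m * q)%N%:Z < (n.+1 * p)%N%:Z; last by rewrite ltz_nat.
rewrite hm; lia.
Qed.

Lemma backward p q k N : (0 < q)%N -> (0 < p)%N -> iter k (f p q) N = 0%N ->
  exists v, [/\ all (alphA p) v, run p q (alphA p) 0 v = Some N & size v = k].
Proof.
move=> q0 p0; elim: k N => [|k IH] N /=.
  by move=> ->; exists [::].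
rewrite -iterS iterSr => /IH [v [hv hr hs]].
set a : int := (N * q %% p)%N%:Z.
have ha : alphA p a.
  rewrite /alphA /a; have := ltn_pmod (N * q) p0; lia.
exists (rcons v a); split.
- by rewrite all_rcons ha hv.
- rewrite -cats1 run_cat hr /= ha.
  rewrite (tau_of _ _ _ _ N q0) //.
  rewrite /a /f; have := divn_eq (N * q) p; lia.
- by rewrite size_rcons hs.
Qed.

Lemma piw_cons p q a w : piw p q (a :: w) =
  piw p q w + a%:~R / q%:R * (p%:R / q%:R) ^+ size w.
Proof.
rewrite /piw /= big_ord_recr /=; congr (_ + _).
  apply: eq_bigr => i _; rewrite rev_cons nth_rcons size_rev /= ltn_ord //.
by rewrite rev_cons nth_rcons size_rev ltnn eqxx.
Qed.

Lemma piw_run p q D n w N : (0 < q)%N -> run p q D n w = Some N ->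
  (N%:R : rat) = n%:R * (p%:R / q%:R) ^+ size w + piw p q w.
Proof.
move=> q0; elim: w n => [|a w IH] n /=.
  by move=> [->]; rewrite expr0 mulr1 /piw big_ord0 addr0.
case: (D a) => //; case ht: (tau p q n a) => [m|] // /IH ->.
have hm := tau_some _ _ _ _ _ q0 ht.
rewrite piw_cons exprS addrCA addrC; congr (_ + _).
rewrite mulrA -mulrDl; congr (_ * _).
have hq : (q%:R : rat) != 0 by rewrite pnatr_eq0 -lt0n.
apply: (mulIf hq).
rewrite mulrDl !mulrA !divfK // -natrM.
have := congr1 (fun z : int => z%:~R : rat) hm.
rewrite /= rmorphD rmorphM /= => h.
have h2 : ((m*q)%:R : rat) = n%:R * p%:R + a%:~R := h.
by rewrite -natrM h2 natrM.
Qed.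

Theorem mainTheorem11 (p q : nat) :
  (1 < q)%N -> (q < p)%N -> coprime p q -> (p < 2 * q - 1)%N ->
  forall u : seq int,
    all (alphB p q) u -> accepted p q (alphB p q) u ->
    exists v : seq int,
      [/\ all (alphA p) v, accepted p q (alphA p) v,
          piw p q u = piw p q v & size u = size v].
Proof.
move=> q1 qp _ _ u hu; rewrite /accepted.
have q0 : (0 < q)%N by apply: ltn_trans q1.
have p0 : (0 < p)%N by apply: ltn_trans qp.
case hr: (run p q (alphB p q) 0 u) => [N|] // _.
have := forward _ _ _ _ _ q0 p0 hu hr; rewrite leqn0 => /eqP /(backward _ _ _ _ q0 p0).
move=> [v [hv hr' hs]]; exists v; split => //.
- by rewrite hr'.
- have := piw_run _ _ _ _ _ _ q0 hr; have := piw_run _ _ _ _ _ _ q0 hr'.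
  by rewrite !mul0r !add0r => -> ->.
Qed.
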